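(* Let $n=p'pq$ where $p',p,q$ are distinct odd primes, let $A=L(n;p')$, and let $n'=n/p$. Then $U(n')\subseteq f(A)$, where $f:\mathbb{Z}_n\to\mathbb{Z}_{n'}$ is the natural map.
   Context: $U(m)$ is the unit group of $\mathbb{Z}_m$. For odd $m=\prod p_i^{r_i}$, prime $p\mid m$ and $a\in U(m)$, $\left(\frac{a}{p}\right)$ is the Legendre symbol of the image of $a$ mod $p$ and $\left(\frac{a}{m}\right)=\prod\left(\frac{a}{p_i}\right)^{r_i}$; $L(m;p')=\{a\in U(m):\left(\frac{a}{m}\right)=\left(\frac{a}{p'}\right)\}$ for a prime $p'\mid m$. The natural map $\mathbb{Z}_n\to\mathbb{Z}_{n'}$ is $a+n\mathbb{Z}\mapsto a+n'\mathbb{Z}$. *)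

(* Defs.v *)
From mathcomp Require Import all_boot all_order all_algebra.
Set Implicit Arguments. Unset Strict Implicit. Unset Printing Implicit Defensive.
Import GRing.Theory Num.Theory.
Local Open Scope ring_scope.

Definition legendre (p a : nat) : int :=
  if (p %| a)%N then 0
  else if [exists x : 'I_p, (x ^ 2 == a %[mod p])%N] then 1 else -1.

Definition jacobi (m a : nat) : int :=
  \prod_(p <- primes m) legendre p a ^+ logn p m.

Definition U (m : nat) : {set 'I_m} := [set a : 'I_m | coprime a m].

Definition L (m p' : nat) : {set 'I_m} :=
  [set a in U m | jacobi m a == legendre p' a].

(* Main.v *)
Require Import Defs.
From mathcomp Require Import all_boot all_order all_algebra.
From mathcomp Require Import zify.
Import GRing.Theory Num.Theory.

Lemma legendre_mod p a : legendre p (a %% p) = legendre p a.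
Proof. by rewrite /legendre /dvdn !modn_mod. Qed.

Lemma legendre_eqmod p a b : a = b %[mod p] -> legendre p a = legendre p b.
Proof. by move=> H; rewrite -legendre_mod H legendre_mod. Qed.

Lemma legendre1 p : prime p -> legendre p 1 = 1.
Proof.
move=> pp; rewrite /legendre dvdn1 (gtn_eqF (prime_gt1 pp)).
case: existsP => // [][]; exists (Ordinal (prime_gt1 pp)) => /=.
by rewrite exp1n.
Qed.

Lemma nonres p : prime p -> odd p -> exists r, (r < p)%N /\ legendre p r = (-1)%R.
Proof.
move=> pp op.
have p0 : (0 < p)%N by rewrite prime_gt0.
case: (pickP (fun r : 'I_p => legendre p r == (-1)%R)) => [r /eqP Hr|H].
  by exists r.
exfalso.
pose f (x : 'I_p) : 'I_p := Ordinal (ltn_pmod (x ^ 2) p0).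
have surj : forall y : 'I_p, exists x, f x == y.
  move=> y; have := H y; rewrite /legendre.
  case: (posnP y) => [y0 _|ypos].
    exists (Ordinal p0); apply/eqP/val_inj => /=; by rewrite y0 mod0n.
  rewrite gtnNdvd //.
  case: existsP => [[x /eqP Hx] _|//].
  exists x; apply/eqP/val_inj => /=; rewrite Hx modn_small //.
pose g y := xchoose (surj y).
have fg y : f (g y) = y by apply/eqP; exact: (xchooseP (surj y)).
have ginj : injective g by apply: (can_inj fg).
have [h gh hg] := injF_bij ginj.
have finj : injective f.
  move=> x1 x2 E; rewrite -(hg x1) -(hg x2) in E *.
  by rewrite !fg in E; rewrite E.
have p2 : (2 < p)%N.
  rewrite ltn_neqAle prime_gt1 // andbT; apply/eqP=> E; by rewrite -E in op.
have lt1 : (1 < p)%N by apply: ltnW.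
have ltpm : (p.-1 < p)%N by rewrite prednK // ltnSn.
have := finj (Ordinal lt1) (Ordinal ltpm).
have E : f (Ordinal lt1) = f (Ordinal ltpm).
  apply/val_inj => /=.
  have -> : (p.-1 ^ 2 = (p - 2) * p + 1)%N by case: p p2 {pp op p0 H f surj g fg ginj h gh hg finj lt1 ltpm} => // k hk; rewrite /= !expnS expn0; nia.
  by rewrite modnMDl exp1n.
move=> /(_ E) [] E'.
by move: p2 E'; clear; case: p => // [[|[|k]]].
Qed.

Lemma jacobi3 p' p q a : prime p' -> prime p -> prime q ->
  p' != p -> p' != q -> p != q ->
  jacobi (p' * p * q) a = (legendre p' a * legendre p a * legendre q a)%R.
Proof.
move=> pp' pp pq n1 n2 n3.
have g0 := prime_gt0.
have perm : perm_eq (primes (p' * p * q)) [:: p'; p; q].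
  apply: uniq_perm; first exact: primes_uniq.
    by rewrite /= !inE negb_or n1 n2 n3.
  move=> r; rewrite mem_primes !inE !muln_gt0 !g0 //=.
  apply/andP/idP => [[pr]|].
    by rewrite !Euclid_dvdM // !dvdn_prime2 // -orbA => /orP[->|/orP[->|->]]; rewrite ?orbT.
  by move=> /orP[/eqP->|/orP[/eqP->|/eqP->]]; split=> //; [apply: dvdn_mulr; apply: dvdn_mulr|apply: dvdn_mulr; apply: dvdn_mull|apply: dvdn_mull].
rewrite /jacobi (perm_big _ perm) !big_cons big_nil.
rewrite !lognM ?muln_gt0 ?g0 // !logn_prime // !eqxx (negbTE n1) (negbTE n2) (negbTE n3).
rewrite eq_sym (negbTE n1) eq_sym (negbTE n2) eq_sym (negbTE n3) /=.
by rewrite !expr1 mulr1 !mulrA.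
Qed.

Lemma key p' p q b : prime p' -> prime p -> prime q -> odd p ->
  p' != p -> p' != q -> p != q -> coprime b (p' * q) ->
  exists a, [/\ (a < p' * p * q)%N, coprime a (p' * p * q),
     jacobi (p' * p * q) a = legendre p' a & a %% (p' * q) = b %% (p' * q)]%N.
Proof.
move=> pp' pp pq op n1 n2 n3 cb.
have g0 := prime_gt0.
have npos : (0 < p' * p * q)%N by rewrite !muln_gt0 !g0.
have cop : coprime (p' * q) p.
  by rewrite coprimeMl !prime_coprime // !dvdn_prime2 // n1 eq_sym n3.
have [c [cp Hc cc]] : exists c, [/\ (c < p)%N, legendre p c = legendre q b & coprime c p].
  have qb : ~~ (q %| b).
    by rewrite -prime_coprime // coprime_sym; move: cb; rewrite coprimeMr => /andP[].
  case E: (legendre q b == 1%R).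
    exists 1%N; rewrite (eqP E) legendre1 // prime_gt1 //; split=> //.
    exact: coprime1n.
  have [r [rp Hr]] := nonres p pp op.
  exists r; split=> //.
    move: E; rewrite Hr /legendre (negbTE qb); by case: existsP.
  rewrite coprime_sym prime_coprime //; apply/negP => D; move: Hr.
  by rewrite /legendre D.
pose a := (chinese (p' * q) p b c %% (p' * p * q))%N.
have dvd1 : (p' * q %| p' * p * q)%N by rewrite mulnAC; apply: dvdn_mulr.
have dvd2 : (p %| p' * p * q)%N by apply: dvdn_mulr; apply: dvdn_mull.
have ma1 : (a = b %[mod p' * q])%N by rewrite /a modn_dvdm // chinese_modl.
have ma2 : (a = c %[mod p])%N by rewrite /a modn_dvdm // chinese_modr.
have dvd3 : (p' %| p' * q)%N by apply: dvdn_mulr.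
have dvd4 : (q %| p' * q)%N by apply: dvdn_mull.
have ma3 : (a = b %[mod p'])%N by rewrite -(modn_dvdm _ dvd3) ma1 modn_dvdm.
have ma4 : (a = b %[mod q])%N by rewrite -(modn_dvdm _ dvd4) ma1 modn_dvdm.
exists a; split.
- by rewrite /a ltn_pmod.
- rewrite mulnAC coprimeMr; apply/andP; split.
    by rewrite -coprime_modl ma1 coprime_modl.
  by rewrite -coprime_modl ma2 coprime_modl.
- rewrite jacobi3 // (legendre_eqmod _ _ _ ma2) (legendre_eqmod _ _ _ ma4) (legendre_eqmod _ _ _ ma3) Hc.
  have qb : coprime b q by move: cb; rewrite coprimeMr => /andP[].
  have : (legendre q b * legendre q b = 1)%R.
    move: qb; rewrite coprime_sym prime_coprime // /legendre => /negbTE ->.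
    by case: existsP.
  by rewrite -mulrA => ->; rewrite mulr1.
- exact: ma1.
Qed.

Theorem lemma5p2 (p' p q : nat) :
  prime p' -> prime p -> prime q -> odd p' -> odd p -> odd q ->
  p' != p -> p' != q -> p != q ->
  forall b : 'I_(p' * p * q %/ p),
    b \in U (p' * p * q %/ p) ->
    exists2 a : 'I_(p' * p * q), a \in L (p' * p * q) p' &
      (a %% (p' * p * q %/ p))%N = b.
Proof.
move=> pp' pp pq _ op _ n1 n2 n3 b.
have Hm : (p' * p * q %/ p = p' * q)%N by rewrite mulnAC mulnK // prime_gt0.
rewrite inE => cb.
have cb' : coprime b (p' * q) by rewrite -Hm.
have [a [alt ca ja ma]] := key p' p q b pp' pp pq op n1 n2 n3 cb'.
exists (Ordinal alt).
  by rewrite inE inE /= ca ja eqxx.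
have bl : (b < p' * q)%N by rewrite -Hm ltn_ord.
by rewrite /= {1}Hm ma modn_small.
Qed.
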